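(* Let $0<p<1$ and let $\mathcal O(D_p)$ be the universal complex $*$-algebra generated by one element $x$ subject to $x^*x-pxx^*=1-p$. Put $X:=1-xx^*$, and for $n\in\mathbb N$ write $x^{-n}:=(x^* )^n$. Then for every $\mu\in\mathbb Z$, $$x^\mu x^{-\mu}=1+\mathcal Q^p_\mu(X).$$
   Context: For real $r>0$ and $n\ge1$, $Q^r_n(Y)=\sum_{m=1}^n(-1)^m r^{-nm+\frac{m(m+1)}{2}}\binom{n}{m}_{r}Y^m$, where $[0]_r=0$, $[n]_r=1+r+\dots+r^{n-1}$, $[n]_r!=[1]_r\cdots[n]_r$, $[0]_r!=1$, $\binom{n}{m}_r=\frac{[n]_r!}{[m]_r![n-m]_r!}$. For $\mu\in\mathbb Z$ define $\mathcal Q^p_\mu(Y)=Q^p_\mu(Y)$ if $\mu>0$, $\mathcal Q^p_0=0$, and $\mathcal Q^p_\mu(Y)=Q^{p^{-1}}_{-\mu}(pY)$ if $\mu<0$. *)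

(* Defs.v *)
From HB Require Import structures.
From mathcomp Require Import all_boot all_order all_algebra.
From mathcomp Require Import complex.
From mathcomp Require Import reals.
Set Implicit Arguments. Unset Strict Implicit. Unset Printing Implicit Defensive.
Import Order.TTheory GRing.Theory Num.Theory.
Local Open Scope ring_scope.

Record star_structure (R : realType) (A : algType R[i]) := StarStructure {
  star : A -> A;
  star_invol : forall a, star (star a) = a;
  star_add : forall a b, star (a + b) = star a + star b;
  star_mul : forall a b, star (a * b) = star b * star a;
  star_scale : forall (c : R[i]) a, star (c *: a) = (conjc c) *: star a
}.

Definition qint (F : fieldType) (r : F) (n : nat) : F := \sum_(i < n) r ^+ i.
Definition qfact (F : fieldType) (r : F) (n : nat) : F := \prod_(1 <= i < n.+1) qint r i.
Definition qbinom (F : fieldType) (r : F) (n m : nat) : F :=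
  qfact r n / (qfact r m * qfact r (n - m)).

Definition Qpoly (F : fieldType) (r : F) (n : nat) : {poly F} :=
  \sum_(1 <= m < n.+1)
     ((-1) ^+ m * r ^ (- (n * m)%:Z + ((m * m.+1) %/ 2)%:Z) * qbinom r n m) *: 'X^m.

Definition calQ (F : fieldType) (p : F) (mu : int) : {poly F} :=
  match mu with
  | Posz 0 => 0
  | Posz n => Qpoly p n
  | Negz k => (Qpoly p^-1 k.+1) \Po (p *: 'X)   (* mu = -(k+1) < 0 *)
  end.

Definition spow (R : realType) (A : algType R[i]) (s : star_structure A)
  (x : A) (mu : int) : A :=
  match mu with
  | Posz n => x ^+ n
  | Negz k => (star s x) ^+ k.+1
  end.

(* Main.v *)
Require Import Defs.
From HB Require Import structures.
From mathcomp Require Import all_boot all_order all_algebra.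
From mathcomp Require Import complex.
From mathcomp Require Import reals.
From mathcomp Require Import ring lra zify.
Import Order.TTheory GRing.Theory Num.Theory.
Local Open Scope ring_scope.

Lemma qint_add {F : fieldType} (r : F) a b :
  qint r (a + b) = qint r a + r ^+ a * qint r b.
Proof.
rewrite /qint big_split_ord /=; congr (_ + _); rewrite mulr_sumr.
by apply: eq_bigr => i _; rewrite exprD.
Qed.

Lemma qfactS {F : fieldType} (r : F) n : qfact r n.+1 = qfact r n * qint r n.+1.
Proof. by rewrite /qfact big_nat_recr. Qed.

Lemma qfact0 {F : fieldType} (r : F) : qfact r 0 = 1.
Proof. by rewrite /qfact big_geq. Qed.

Lemma qfact_neq0 {F : fieldType} (r : F) :
  (forall i, (0 < i)%N -> qint r i != 0) -> forall n, qfact r n != 0.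
Proof.
move=> H; elim=> [|n IH]; first by rewrite qfact0 oner_neq0.
by rewrite qfactS mulf_neq0 // H.
Qed.

Lemma qpascal {F : fieldType} (r : F) :
  (forall i, (0 < i)%N -> qint r i != 0) -> forall n m, (m < n)%N ->
  qbinom r n.+1 m.+1 = r ^+ m.+1 * qbinom r n m.+1 + qbinom r n m.
Proof.
move=> H n m lt_mn.
have [j ->] : exists j, n = (j + m.+1)%N by exists (n - m.+1)%N; rewrite subnK.
rewrite /qbinom.
have -> : ((j + m.+1).+1 - m.+1 = j.+1)%N by lia.
have -> : ((j + m.+1) - m.+1 = j)%N by lia.
have -> : ((j + m.+1) - m = j.+1)%N by lia.
have Hq := @qfact_neq0 F r H.
rewrite (@qfactS _ r (j + m.+1)) (@qfactS _ r m) (@qfactS _ r j).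
have -> : ((j + m.+1).+1 = m.+1 + j.+1)%N by lia.
rewrite qint_add.
have H1 := H m.+1 isT. have H2 := H j.+1 isT.
field.
by rewrite H1 H2 !Hq.
Qed.

Definition cc {F : fieldType} (r : F) (n m : nat) : F :=
  (-1) ^+ m * r ^ (- (n * m)%:Z + ((m * m.+1) %/ 2)%:Z) * qbinom r n m.
Definition dd {F : fieldType} (r : F) (n m : nat) : F :=
  if (m <= n)%N then cc r n m else 0.

Lemma halfS m : ((m.+1 * m.+2) %/ 2 = (m * m.+1) %/ 2 + m.+1)%N.
Proof.
have -> : (m.+1 * m.+2 = m * m.+1 + m.+1 * 2)%N by ring.
by rewrite divnDMl.
Qed.

Lemma e1 n m : (- (n * m.+1)%:Z + ((m.+1 * m.+2) %/ 2)%:Z =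
  (- (n.+1 * m.+1)%:Z + ((m.+1 * m.+2) %/ 2)%:Z) + m.+1%:Z)%R.
Proof. rewrite halfS. lia. Qed.

Lemma e2 n m : (- n%:Z + (- (n * m)%:Z + ((m * m.+1) %/ 2)%:Z) =
  - (n.+1 * m.+1)%:Z + ((m.+1 * m.+2) %/ 2)%:Z)%R.
Proof. rewrite halfS. lia. Qed.

Lemma qbinom0 {F : fieldType} (r : F) :
  (forall i, (0 < i)%N -> qint r i != 0) -> forall n, qbinom r n 0 = 1.
Proof.
move=> H n; rewrite /qbinom qfact0 mul1r subn0 divff //.
exact: qfact_neq0.
Qed.

Lemma qbinomnn {F : fieldType} (r : F) :
  (forall i, (0 < i)%N -> qint r i != 0) -> forall n, qbinom r n n = 1.
Proof.
move=> H n; rewrite /qbinom subnn qfact0 mulr1 divff //.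
exact: qfact_neq0.
Qed.

Lemma dd0 {F : fieldType} (r : F) :
  (forall i, (0 < i)%N -> qint r i != 0) -> forall n, dd r n 0 = 1.
Proof.
move=> H n; rewrite /dd /cc /= muln0 qbinom0 // expr0 mul1r mulr1.
by rewrite expr0z.
Qed.

Lemma pow1 {F : fieldType} (r : F) : r != 0 -> forall n m,
  r ^ (- (n * m.+1)%:Z + ((m.+1 * m.+2) %/ 2)%:Z) =
  r ^ (- (n.+1 * m.+1)%:Z + ((m.+1 * m.+2) %/ 2)%:Z) * r ^+ m.+1.
Proof. by move=> r0 n m; rewrite e1 expfzDr. Qed.

Lemma pow2 {F : fieldType} (r : F) : r != 0 -> forall n m,
  r ^ (- n%:Z) * r ^ (- (n * m)%:Z + ((m * m.+1) %/ 2)%:Z) =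
  r ^ (- (n.+1 * m.+1)%:Z + ((m.+1 * m.+2) %/ 2)%:Z).
Proof. by move=> r0 n m; rewrite -expfzDr // e2. Qed.

Lemma dd_rec {F : fieldType} (r : F) : r != 0 ->
  (forall i, (0 < i)%N -> qint r i != 0) -> forall n m,
  dd r n.+1 m.+1 = dd r n m.+1 - r ^ (- n%:Z) * dd r n m.
Proof.
move=> r0 H n m; rewrite /dd.
case: (ltngtP m n) => [lt_mn|lt_nm|->].
- have h1 : (m.+1 <= n.+1)%N by lia.
  have h2 : (m.+1 <= n)%N by lia.
  have h3 : (m <= n)%N by lia.
  rewrite ?h1 ?h2 ?h3 /cc qpascal //.
  rewrite (pow1 r r0 n m) -(pow2 r r0 n m).
  rewrite !exprS; ring.
- have h1 : (m.+1 <= n.+1)%N = false by lia.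
  have h2 : (m.+1 <= n)%N = false by lia.
  have h3 : (m <= n)%N = false by lia.
  by rewrite ?h1 ?h2 ?h3 mulr0 subr0.
- have h2 : (n.+1 <= n)%N = false by lia.
  rewrite ?leqnn ?ltnSn ?h2 /cc !qbinomnn // sub0r.
  rewrite -(pow2 r r0 n n).
  rewrite !exprS; ring.
Qed.

Lemma S_eq {F : fieldType} (r : F) :
  (forall i, (0 < i)%N -> qint r i != 0) -> forall n,
  1 + Qpoly r n = \sum_(m < n.+1) dd r n m *: 'X^m.
Proof.
move=> H n.
rewrite -(big_mkord xpredT (fun m => dd r n m *: 'X^m)) big_ltn // dd0 // expr0 scale1r.
congr (_ + _); rewrite /Qpoly; apply: eq_big_nat => m /andP [_ hm].
by rewrite /dd -ltnS hm.
Qed.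

Lemma ddout {F : fieldType} (r : F) n : dd r n n.+1 = 0.
Proof. by rewrite /dd ltnn. Qed.

Lemma S_rec {F : fieldType} (r : F) : r != 0 ->
  (forall i, (0 < i)%N -> qint r i != 0) -> forall n,
  \sum_(m < n.+2) dd r n.+1 m *: 'X^m =
  (1 - r ^ (- n%:Z) *: 'X) * \sum_(m < n.+1) dd r n m *: 'X^m.
Proof.
move=> r0 H n.
have E : \sum_(m < n.+1) dd r n m *: 'X^m =
    1 + \sum_(i < n.+1) dd r n i.+1 *: 'X^(i.+1).
  have -> : \sum_(m < n.+1) dd r n m *: 'X^m = \sum_(m < n.+2) dd r n m *: 'X^m.
    by rewrite [RHS]big_ord_recr /= ddout scale0r addr0.
  by rewrite big_ord_recl dd0 // expr0 scale1r.
have E2 : 'X * \sum_(m < n.+1) dd r n m *: 'X^m =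
    \sum_(i < n.+1) dd r n i *: 'X^(i.+1).
  rewrite mulr_sumr; apply: eq_bigr => i _.
  by rewrite -scalerAr exprS.
rewrite mulrBl mul1r -scalerAl E2 E.
rewrite big_ord_recl dd0 // expr0 scale1r /=.
rewrite -addrA; congr (_ + _).
under eq_bigr => i _ do rewrite /bump /= add1n dd_rec // scalerBl -scalerA.
by rewrite sumrB scaler_sumr.
Qed.

Lemma Qpoly_prod {F : fieldType} (r : F) : r != 0 ->
  (forall i, (0 < i)%N -> qint r i != 0) -> forall n,
  1 + Qpoly r n = \prod_(k < n) (1 - r ^ (- k%:Z) *: 'X).
Proof.
move=> r0 H n; rewrite S_eq //.
elim: n => [|n IH].
  by rewrite big_ord0 big_ord1 dd0 // expr0 scale1r.
by rewrite S_rec // IH big_ord_recr /= mulrC.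
Qed.

Lemma qint_real (R : realType) (c : R) i : qint (c%:C)%C i = ((qint c i)%:C)%C.
Proof.
rewrite /qint rmorph_sum; apply: eq_bigr => k _.
by rewrite rmorphXn.
Qed.

Lemma qint_pos (R : realType) (c : R) i : 0 < c -> (0 < i)%N -> 0 < qint c i.
Proof.
move=> c0; case: i => [//|i] _; rewrite /qint big_ord_recl expr0.
have : 0 <= \sum_(k < i) c ^+ bump 0 k.
  by apply: sumr_ge0 => k _; rewrite exprn_ge0 // ltW.
lra.
Qed.

Lemma qintC_neq0 (R : realType) (c : R) : 0 < c ->
  forall i, (0 < i)%N -> qint (c%:C)%C i != 0.
Proof.
move=> c0 i hi; rewrite qint_real fmorph_eq0.
by rewrite gt_eqF // qint_pos.
Qed.

Lemma comp_prod {F : fieldType} (a : nat -> F) (q : {poly F}) n :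
  (\prod_(k < n) (1 - a k *: 'X)) \Po q = \prod_(k < n) (1 - a k *: q).
Proof.
elim: n => [|n IH]; first by rewrite !big_ord0 comp_polyC.
rewrite !big_ord_recr /= comp_polyM IH; congr (_ * _).
by rewrite comp_polyB comp_polyC comp_polyZ comp_polyX.
Qed.

Section Alg.
Lemma alg_main (R : realType) (A : algType R[i]) (x xs : A) (r : R[i]) :
  r != 0 -> xs * x = 1 - r *: (1 - x * xs) ->
  (forall n, x ^+ n * xs ^+ n = horner_alg (1 - x * xs)
      (\prod_(k < n) (1 - r ^ (- k%:Z) *: 'X))) /\
  (forall n, xs ^+ n * x ^+ n = horner_alg (1 - x * xs)
      (\prod_(k < n) (1 - (r ^+ k * r) *: 'X))).
Proof.
move=> r0 xsx.
set X := 1 - x * xs in xsx *.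
have xxs : x * xs = 1 - X by rewrite /X opprB addrC subrK.
have Xx : X * x = r *: (x * X).
  by rewrite {1}/X mulrBl mul1r -mulrA xsx mulrBr mulr1 -scalerAr opprB addrC subrK.
clearbody X.
have Xxn : forall n, X * x ^+ n = r ^+ n *: (x ^+ n * X).
  elim=> [|n IH]; first by rewrite expr0 mulr1 mul1r scale1r.
  rewrite exprSr mulrA IH -scalerAl -(mulrA (x ^+ n) X x) Xx -scalerAr scalerA.
  by rewrite mulrA -!exprSr.
have hX : forall c : R[i], horner_alg X (1 - c *: 'X) = 1 - c *: X.
  move=> c; rewrite rmorphB rmorph1; congr (_ - _).
  by rewrite -mul_polyC rmorphM /= horner_algC horner_algX mulr_algl.
split.
- elim=> [|n IH]; first by rewrite !expr0 mulr1 big_ord0 rmorph1.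
  rewrite big_ord_recr /= mulrC rmorphM /= hX -IH.
  rewrite exprSr exprS mulrA -(mulrA (x ^+ n)) xxs mulrBr mulr1 mulrBl.
  have -> : x ^+ n * X = (r ^+ n)^-1 *: (X * x ^+ n).
    by rewrite Xxn scalerA mulVf ?expf_neq0 // scale1r.
  by rewrite exprnN mulrBl mul1r -!scalerAl mulrA.
- elim=> [|n IH]; first by rewrite !expr0 mulr1 big_ord0 rmorph1.
  rewrite big_ord_recr /= rmorphM /= hX -IH.
  rewrite [xs ^+ n.+1]exprSr [x ^+ n.+1]exprS mulrA -(mulrA (xs ^+ n)) xsx mulrBr mulr1 mulrBl.
  rewrite -!scalerAr -!scalerAl -mulrA Xxn -!scalerAr scalerA mulrA.
  by rewrite mulrBr mulr1 -scalerAr (mulrC r).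
Qed.
End Alg.

Theorem mainTheorem5 (R : realType) (A : algType R[i]) (s : star_structure A)
  (p : R) (x : A) :
  0 < p < 1 ->
  star s x * x - (p%:C)%C *: (x * star s x) = ((1 - p)%:C)%C *: 1 ->
  forall mu : int,
    spow s x mu * spow s x (- mu) =
    1 + horner_alg (1 - x * star s x) (calQ (p%:C)%C mu).
Proof.
move=> /andP [p0 p1] Hrel.
set r := (p%:C)%C.
have r0 : r != 0 by rewrite /r fmorph_eq0 gt_eqF.
have hC : ((1 - p)%:C)%C = 1 - r by rewrite rmorphB rmorph1.
have xsx : star s x * x = 1 - r *: (1 - x * star s x).
  move/eqP: Hrel; rewrite subr_eq => /eqP ->.
  by rewrite hC scalerBr scalerBl !scale1r opprB addrA addrAC.
have [HP HN] := @alg_main R A x (star s x) r r0 xsx.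
have Hq : forall i, (0 < i)%N -> qint r i != 0 by apply: qintC_neq0.
have rV : r^-1 = ((p^-1)%:C)%C by rewrite fmorphV.
have Hq' : forall i, (0 < i)%N -> qint r^-1 i != 0.
  by rewrite rV; apply: qintC_neq0; rewrite invr_gt0.
have hplus : forall q : {poly R[i]}, 1 + horner_alg (1 - x * star s x) q =
    horner_alg (1 - x * star s x) (1 + q).
  by move=> q; rewrite rmorphD rmorph1.
case=> [[|n]|k].
- by rewrite oppr0 /= expr0 mulr1 rmorph0 addr0.
- rewrite -NegzE /= HP hplus (@Qpoly_prod _ r r0 Hq).
  reflexivity.
- have -> : - Negz k = Posz k.+1 by rewrite NegzE opprK.
  rewrite /=.
  rewrite hplus.
  have -> : 1 + (Qpoly r^-1 k.+1 \Po (r *: 'X)) = (1 + Qpoly r^-1 k.+1) \Po (r *: 'X).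
    by rewrite comp_polyD comp_polyC.
  rewrite (@Qpoly_prod _ r^-1 (invr_neq0 r0) Hq') (comp_prod (fun k : nat => r^-1 ^ (- k%:Z))) HN.
  congr (horner_alg _ _); apply: eq_bigr => i _.
  by rewrite scalerA -exprnN exprVn invrK.
Qed.
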